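(* Let $n\geq 1$ and let $Q\in\mathbb{Q}^{n\times n}$ be a rational orthogonal matrix with level $\ell$, and let $d_1,\ldots,d_n$ be the diagonal entries of the Smith normal form of the integer matrix $\ell Q$. Suppose that $X$ is a random symmetric integer $n\times n$ matrix whose upper-triangular entries $\{X_{i,j}:i\leq j\}$ have independent and uniformly distributed reductions to $\mathbb{Z}/\ell^2\mathbb{Z}$. Then $$\mathbb{P}(Q^{T}XQ\in\mathbb{Z}^{n\times n})=\prod_{i=1}^{\lfloor n/2\rfloor}\prod_{j=i}^{n-i}\frac{d_id_j}{\ell^2}.$$
   Context: The level of a rational matrix $Q$ is the least integer $\ell\geq 1$ with $\ell Q\in\mathbb{Z}^{n\times n}$. The Smith normal form entries $d_1,\ldots,d_n$ are taken to be nonnegative integers with $d_1\mid d_2\mid\cdots\mid d_n$, so that the Smith ideals of $\ell Q$ over $\mathbb{Z}$ are $d_i\mathbb{Z}$. *)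

(* Defs.v *)
From HB Require Import structures.
From mathcomp Require Import all_boot all_order all_algebra.
From mathcomp Require Import all_classical all_reals all_analysis.
Set Implicit Arguments. Unset Strict Implicit. Unset Printing Implicit Defensive.
Import Order.TTheory GRing.Theory Num.Theory.
Local Open Scope ring_scope.
Local Open Scope classical_set_scope.

Definition int_mx m n (A : 'M[rat]_(m, n)) : Prop :=
  forall i j, A i j \is a Num.int.

Definition is_level n (Q : 'M[rat]_n) (l : nat) : Prop :=
  (0 < l)%N /\ int_mx (l%:R *: Q) /\
  forall k : nat, (0 < k)%N -> int_mx (k%:R *: Q) -> (l <= k)%N.

Definition rat_orthogonal n (Q : 'M[rat]_n) : Prop := Q^T *m Q = 1%:M.

Definition smith_diag n (M : 'M[int]_n) (d : seq int) : Prop :=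
  [/\ size d = n, all (fun x => 0 <= x) d, sorted (fun a b => (a %| b)%Z) d &
      exists2 U : 'M[int]_n, U \in unitmx &
      exists2 V : 'M[int]_n, V \in unitmx &
        M = U *m (\matrix_(i, j) (d`_i *+ (i == j :> nat))) *m V].

Definition mutually_independent_int (R : realType) (d : measure_display)
  (T : measurableType d) (P : probability T R) (I : finType) (A : {set I})
  (Y : I -> T -> int) : Prop :=
  forall (S : {set I}) (a : I -> int), S \subset A ->
    P (\bigcap_(i in [set i | i \in S]) [set w | Y i w = a i]) =
    (\prod_(i in S) P [set w | Y i w = a i])%E.

Definition uniform_mod (R : realType) (d : measure_display)
  (T : measurableType d) (P : probability T R) (m : nat) (Y : T -> int) : Prop :=
  forall a : int, 0 <= a < m%:Z -> P [set w | Y w = a] = (m%:R^-1)%:E.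

(* Main.v *)
Require Import Defs.
From HB Require Import structures.
From mathcomp Require Import all_boot all_order all_algebra.
From mathcomp Require Import all_classical all_reals all_analysis.
From mathcomp Require Import perm zify.
Import Order.TTheory GRing.Theory Num.Theory.
Set Implicit Arguments. Unset Strict Implicit.
Lemma card_ord_pred n (P : pred nat) : #|[pred j : 'I_n | P j]| = count P (iota 0 n).
Proof.
rewrite -val_enum_ord count_map enumT cardE /enum_mem size_filter.
by apply: eq_count => j.
Qed.
Lemma count_iota_le i n : i < n -> count (fun j => j <= i) (iota 0 n) = i.+1.
Proof.
move=> lt; have -> : n = i.+1 + (n - i.+1) by lia.
rewrite iotaD count_cat add0n.
rewrite (@eq_in_count _ _ predT); last first.
  by move=> x; rewrite mem_iota /= => h; apply/eqP; rewrite ?eqbF_neg ?eqb_id; lia.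
rewrite count_predT size_iota.
rewrite (@eq_in_count _ _ pred0); last first.
  by move=> x; rewrite mem_iota /= => h; apply/eqP; rewrite ?eqbF_neg ?eqb_id; lia.
by rewrite count_pred0 addn0.
Qed.
Lemma count_iota_ge i n : i <= n -> count (fun j => i <= j) (iota 0 n) = n - i.
Proof.
move=> lt; have -> : n = i + (n - i) by lia.
rewrite iotaD count_cat add0n.
rewrite (@eq_in_count _ _ pred0 (iota 0 i)); last first.
  by move=> x; rewrite mem_iota /= => h; apply/negbTE; lia.
rewrite count_pred0.
rewrite (@eq_in_count _ _ predT (iota i _)); last first.
  by move=> x; rewrite mem_iota /= => h; lia.
rewrite count_predT size_iota; lia.
Qed.
Lemma php n (f : 'I_n -> 'I_n) (S T : pred nat) : injective f ->
  count T (iota 0 n) < count S (iota 0 n) -> exists j : 'I_n, S j /\ ~~ T (f j).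
Proof.
move=> inj lt.
have [/existsP [j /andP [Sj Tj]]|] := boolP [exists j : 'I_n, S j && ~~ T (f j)].
  by exists j.
rewrite negb_exists => /forallP H.
have sub : [set f j | j in [pred j : 'I_n | S j]] \subset [pred k : 'I_n | T k].
  apply/fintype.subsetP => _ /imsetP [j Sj ->]; move: (H j); rewrite inE in Sj.
  by rewrite Sj /= negbK.
move: (subset_leq_card sub); rewrite card_in_imset; last by move=> x y _ _; apply: inj.
by rewrite !card_ord_pred leqNgt lt.
Qed.
Lemma php1 n (f : 'I_n -> 'I_n) (i : nat) : injective f -> i < n ->
  exists j : 'I_n, j <= i /\ f j <= n.-1 - i.
Proof.
move=> inj lt.
have H : count (fun k => n - i <= k) (iota 0 n) < count (fun j => j <= i) (iota 0 n).
  rewrite count_iota_le // count_iota_ge; lia.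
have [j [Sj Tj]] := @php _ f (fun j => j <= i) (fun k => n - i <= k) inj H.
exists j; split => //; lia.
Qed.
Lemma count_iota_lt c n : c <= n -> count (fun j => j < c) (iota 0 n) = c.
Proof.
move=> lt; have -> : n = c + (n - c) by lia.
rewrite iotaD count_cat add0n.
rewrite (@eq_in_count _ _ predT (iota 0 c)); last first.
  by move=> x; rewrite mem_iota /= => h; lia.
rewrite count_predT size_iota.
rewrite (@eq_in_count _ _ pred0 (iota c _)); last first.
  by move=> x; rewrite mem_iota /= => h; apply/negbTE; lia.
rewrite count_pred0; lia.
Qed.
Lemma php2 n (f : 'I_n -> 'I_n) (i : nat) : injective f -> i < n ->
  exists j : 'I_n, i <= j /\ n.-1 - i <= f j.
Proof.
move=> inj lt.
have H : count (fun k => k < n.-1 - i) (iota 0 n) < count (fun j => i <= j) (iota 0 n).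
  rewrite count_iota_ge; last lia.
  rewrite count_iota_lt; lia.
have [j [Sj Tj]] := @php _ f (fun j => i <= j) (fun k => k < n.-1 - i) inj H.
exists j; split => //; lia.
Qed.
Open Scope ring_scope.
Lemma perm_nondiv n (A : 'M[int]_n) (p : int) : ~~ (p %| \det A)%Z ->
  exists s : {perm 'I_n}, forall i, ~~ (p %| A i (s i))%Z.
Proof.
move=> ndv.
have [/existsP [s /forallP H]|] := boolP [exists s : {perm 'I_n}, [forall i, ~~ (p %| A i (s i))%Z]].
  by exists s.
rewrite negb_exists => /forallP H; case/negP: ndv.
rewrite /determinant; elim/big_ind: _ => //; first (by move=> x y; exact: rpredD); move=> s _.
apply: dvdz_mull.
move: (H s); rewrite negb_forall => /existsP [i]; rewrite negbK => hi.
rewrite (bigD1 i) //=; exact: dvdz_mulr.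
Qed.
Lemma unit_ndvd n (A B : 'M[int]_n) (p : nat) : prime p -> A *m B = 1%:M ->
  ~~ (p%:Z %| \det A)%Z.
Proof.
move=> pp AB; apply/negP => h.
have := dvdz_trans h (dvdz_mulr (\det B) (dvdzz _)).
rewrite -det_mulmx AB det1 dvdz1 /= => /eqP p1; move: pp; rewrite p1.
by [].
Qed.

Definition Dm (n : nat) (d : seq int) : 'M[int]_n := \matrix_(i, j) (d`_i *+ (i == j :> nat)).
Lemma Dm_diag (n : nat) (d : seq int) : Dm n d = diag_mx (\row_i d`_i).
Proof. by apply/matrixP => i j; rewrite !mxE. Qed.
Lemma Dm_tr (n : nat) (d : seq int) : (Dm n d)^T = Dm n d.
Proof. apply/matrixP => i j; rewrite !mxE eq_sym; case: eqP => // /val_inj -> //. Qed.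
Lemma DmMDm (n : nat) (d : seq int) (M : 'M[int]_n) i j : (Dm n d *m M *m Dm n d) i j = d`_i * M i j * d`_j.
Proof. by rewrite Dm_diag mul_diag_mx mul_mx_diag !mxE. Qed.

Lemma key_eq n (m : int) (L U V : 'M[int]_n) (d : seq int) :
  L^T *m L = m%:M -> V \in unitmx -> L = U *m Dm n d *m V ->
  Dm n d *m (U^T *m U) *m Dm n d = m *: ((invmx V)^T *m invmx V).
Proof.
move=> hLL hV hL.
have e1 : V^T *m (Dm n d *m (U^T *m U) *m Dm n d) *m V = m%:M.
  rewrite -hLL hL !trmx_mul Dm_tr !mulmxA //.
have e2 : (invmx V)^T *m V^T = 1%:M by rewrite -trmx_mul mulmxV // trmx1.
move: e1; set X := Dm n d *m _ *m _ => e1; clearbody X.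
have -> : X = (invmx V)^T *m (V^T *m X *m V) *m invmx V.
  by rewrite !mulmxA e2 mul1mx -mulmxA (mulmxV hV) mulmx1.
by rewrite e1 mul_mx_scalar scalemxAl.
Qed.

Lemma d_pair n (m : nat) (L U V : 'M[int]_n) (d : seq int) :
  (0 < m)%N -> L^T *m L = (m%:Z)%:M -> size d = n -> all (fun x => 0 <= x) d ->
  sorted (fun a b => (a %| b)%Z) d -> U \in unitmx -> V \in unitmx ->
  L = U *m Dm n d *m V ->
  (forall i, (i < n)%N -> 0 < d`_i) /\
  (forall i, (i < n)%N -> d`_i * d`_(n.-1 - i) = m%:Z).
Proof.
move=> m0 hLL sd d0 dsort hU hV hL.
have KE := key_eq hLL hV hL.
set G := U^T *m U in KE; set W := (invmx V)^T *m invmx V in KE.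
have E (i j : 'I_n) : d`_i * G i j * d`_j = m%:Z * W i j.
  by rewrite -DmMDm KE mxE.
have Gu : G *m (invmx U *m (invmx U)^T) = 1%:M.
  rewrite /G -mulmxA [U *m _]mulmxA (mulmxV hU) mul1mx -trmx_mul (mulVmx hU).
  by rewrite trmx1.
have Wu : W *m (V *m V^T) = 1%:M.
  rewrite /W -mulmxA [invmx V *m _]mulmxA (mulVmx hV) mul1mx -trmx_mul (mulmxV hV).
  by rewrite trmx1.
have dge0 k : 0 <= d`_k.
  case: (ltnP k (size d)) => hk; last by rewrite nth_default.
  by move/allP: d0; apply; rewrite mem_nth.
have dpos i : (i < n)%N -> 0 < d`_i.
  move=> hi; rewrite lt_def dge0 andbT; apply/eqP => di0.
  have [t Ht] := perm_nondiv (unit_ndvd (isT : prime 2) Wu).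
  move: (Ht (Ordinal hi)) (E (Ordinal hi) (t (Ordinal hi))) => /=.
  rewrite di0 !mul0r => + /esym /eqP; rewrite mulf_eq0 (negbTE (_ : m%:Z != 0)); last by rewrite eqz_nat -lt0n.
  by move=> h /= /eqP W0; move: h; rewrite W0 dvdz0.
split => // i hi.
have dabs k : (k < n)%N -> (0 < `|(d`_k)%R|%N)%N by move=> hk; rewrite absz_gt0 gt_eqF // dpos.
have mono p j k : (j <= k < n)%N -> (logn p `|(d`_j)%R|%N <= logn p `|(d`_k)%R|%N)%N.
  move=> /andP [jk kn]; apply: dvdn_leq_log; first exact: dabs.
  rewrite -dvdzE; apply: (sorted_leq_nth dvdz_trans dvdzz) => //; rewrite inE; lia.
have val p : prime p -> (logn p `|(d`_i)%R|%N + logn p `|(d`_(n.-1 - i))%R|%N = logn p m)%N.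
  move=> pp.
  have pnd (x : int) : ~~ (p%:Z %| x)%Z -> logn p `|x|%N = 0%N.
    by move=> h; apply: logn_coprime; rewrite prime_coprime // -dvdzE.
  have [s Hs] := perm_nondiv (unit_ndvd pp Gu).
  have [t Ht] := perm_nondiv (unit_ndvd pp Wu).
  have lo (j k : 'I_n) : d`_j * G j k * d`_k != 0 -> (logn p `|(d`_j)%R|%N + logn p `|G j k|%N + logn p `|(d`_k)%R|%N = logn p m + logn p `|W j k|%N)%N.
    rewrite E => nz; move: (nz); rewrite mulf_eq0 negb_or => /andP [_ Wnz].
    move: nz; rewrite -E !mulf_eq0 !negb_or => /andP [/andP [dj Gnz] dk].
    have := congr1 (fun x : int => logn p `|x|%N) (E j k) => /=.
    rewrite !abszM !lognM ?absz_gt0 // ?muln_gt0 ?absz_gt0 ?dj ?Gnz //. by case: (m) m0.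
  have nzs (j : 'I_n) : d`_j * G j (s j) * d`_(s j) != 0.
    have dn (k : 'I_n) : d`_k != 0 by rewrite gt_eqF ?dpos.
    rewrite !mulf_eq0 !negb_or !dn /= andbT.
    by apply/eqP => h; move: (Hs j); rewrite h dvdz0.
  have nzt (j : 'I_n) : d`_j * G j (t j) * d`_(t j) != 0.
    rewrite E mulf_eq0 negb_or eqz_nat -lt0n m0 /=.
    by apply/eqP => h; move: (Ht j); rewrite h dvdz0.
  have [j [ji sj]] := php1 (@perm_inj _ s) hi.
  have [k [ik tk]] := php2 (@perm_inj _ t) hi.
  have h1 := lo _ _ (nzs j); rewrite (pnd (G j (s j))) // in h1.
  have h2 := lo _ _ (nzt k); rewrite (pnd (W k (t k))) // in h2.
  have := @mono p j i; have := @mono p (s j) (n.-1 - i)%N.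
  have := @mono p i k; have := @mono p (n.-1 - i)%N (t k).
  move: (ltn_ord k) (ltn_ord (s j)) (ltn_ord (t k)) h1 h2.
  set a := logn p m. set W1 := logn p `|W j (s j)|%N. set G1 := logn p `|G k (t k)|%N.
  set x := logn p `|(d`_i)%R|%N. set y := logn p `|(d`_(n.-1 - i))%R|%N.
  set x1 := logn p `|(d`_j)%R|%N. set y1 := logn p `|(d`_(s j))%R|%N.
  set x2 := logn p `|(d`_k)%R|%N. set y2 := logn p `|(d`_(t k))%R|%N.
  move=> *; lia.
have := @eqn_from_log (`|(d`_i)%R|%N * `|(d`_(n.-1 - i))%R|%N) m.
rewrite muln_gt0 !dabs //; last lia.
move=> /(_ isT m0) h.
rewrite -[d`_i]gez0_abs ?dge0 // -[d`_(n.-1 - i)]gez0_abs ?dge0 // -PoszM h //.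
move=> p; case: (boolP (prime p)) => pp.
  by rewrite lognM ?dabs //; [exact: val | lia].
by rewrite /logn !ifN // => /andP [].
Qed.

Open Scope ring_scope.

Definition symh n M (h : {ffun 'I_n * 'I_n -> 'I_M.+1}) : 'M[int]_n :=
  \matrix_(i, j) ((if (i <= j)%N then h (i, j) else h (j, i)) : nat)%:Z.
Definition redm n M (Z : 'M[int]_n) : {ffun 'I_n * 'I_n -> 'I_M.+1} :=
  [ffun p : 'I_n * 'I_n => if (p.1 <= p.2)%N then inord `|(Z p.1 p.2 %% M.+1%:Z)%Z|%N else ord0].
Definition congm n (k : int) (Z1 Z2 : 'M[int]_n) :=
  forall i j, (k %| Z1 i j - Z2 i j)%Z.
Definition Z0 n M (h : {ffun 'I_n * 'I_n -> 'I_M.+1}) :=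
  [forall p : 'I_n * 'I_n, (p.1 <= p.2)%N || (h p == ord0)].

Lemma congm_refl n k (Z : 'M[int]_n) : congm k Z Z.
Proof. by move=> i j; rewrite subrr dvdz0. Qed.
Lemma congm_sym n k (Z1 Z2 : 'M[int]_n) : congm k Z1 Z2 -> congm k Z2 Z1.
Proof. by move=> h i j; rewrite -opprB rpredN. Qed.
Lemma congm_trans n k (Z1 Z2 Z3 : 'M[int]_n) : congm k Z1 Z2 -> congm k Z2 Z3 -> congm k Z1 Z3.
Proof.
move=> h1 h2 i j; have -> : Z1 i j - Z3 i j = (Z1 i j - Z2 i j) + (Z2 i j - Z3 i j) by rewrite addrA subrK.
exact: rpredD.
Qed.
Lemma dvd_mxl n k (A K : 'M[int]_n) : (forall i j, (k %| K i j)%Z) ->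
  forall i j, (k %| (A *m K) i j)%Z.
Proof.
move=> h i j; rewrite mxE; elim/big_ind: _ => //; first by move=> x y; exact: rpredD.
by move=> l _; apply: dvdz_mull.
Qed.
Lemma dvd_mxr n k (A K : 'M[int]_n) : (forall i j, (k %| K i j)%Z) ->
  forall i j, (k %| (K *m A) i j)%Z.
Proof.
move=> h i j; rewrite mxE; elim/big_ind: _ => //; first by move=> x y; exact: rpredD.
by move=> l _; apply: dvdz_mulr.
Qed.
Lemma congm_mul n k (A B Z1 Z2 : 'M[int]_n) : congm k Z1 Z2 ->
  congm k (A *m Z1 *m B) (A *m Z2 *m B).
Proof.
move=> h i j.
have -> : (A *m Z1 *m B) i j - (A *m Z2 *m B) i j = (A *m (Z1 - Z2) *m B) i j.
  by rewrite mulmxBr mulmxBl !mxE.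
by apply: dvd_mxr; apply: dvd_mxl => i' j'; rewrite !mxE.
Qed.

Lemma modz_val M (z : int) :
  ((inord `|(z %% M.+1%:Z)%Z|%N : 'I_M.+1) : nat)%:Z = (z %% M.+1%:Z)%Z.
Proof.
have ge0 : 0 <= (z %% M.+1%:Z)%Z by rewrite modz_ge0.
have lt : ((z %% M.+1%:Z)%Z < M.+1%:Z) by rewrite ltz_pmod.
rewrite inordK ?gez0_abs //.
by rewrite -ltz_nat gez0_abs.
Qed.
Lemma dvd_modz (k z : int) : (k %| (z %% k)%Z - z)%Z.
Proof.
have -> : (z %% k)%Z - z = - ((z %/ k)%Z * k).
  by rewrite {2}(divz_eq z k) opprD addrA addrAC addrN add0r.
by rewrite rpredN; exact: dvdz_mull (dvdzz k).
Qed.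
Lemma red_cong n M (Z1 Z2 : 'M[int]_n) : congm M.+1 Z1 Z2 -> redm M Z1 = redm M Z2.
Proof.
move=> h; apply/ffunP => p; rewrite !ffunE; case: ifP => // _.
by congr inord; congr absz; apply/eqP; rewrite eqz_mod_dvd.
Qed.
Lemma sym_red n M (Z : 'M[int]_n) : Z^T = Z -> congm M.+1 (symh (redm M Z)) Z.
Proof.
move=> hZ i j; rewrite mxE; case: ifP => hij; rewrite ffunE /= ?hij.
  by rewrite modz_val dvd_modz.
have -> : (j <= i)%N by move/negbT: hij; rewrite -ltnNge => /ltnW.
rewrite modz_val -{2}hZ mxE; exact: dvd_modz.
Qed.
Lemma red_sym n M (h : {ffun 'I_n * 'I_n -> 'I_M.+1}) : Z0 h -> redm M (symh h) = h.
Proof.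
move=> /forallP hz; apply/ffunP => -[i j]; rewrite !ffunE /=; case: ifP => hij.
  rewrite mxE hij modz_small; last by rewrite ltz_nat ltn_ord andbT.
  by rewrite absz_nat inord_val.
by move: (hz (i, j)) => /=; rewrite hij /= => /eqP ->.
Qed.
Lemma symh_tr n M (h : {ffun 'I_n * 'I_n -> 'I_M.+1}) : (symh h)^T = symh h.
Proof.
apply/matrixP => i j; rewrite !mxE.
by case: (ltngtP i j) => [lt|gt|/val_inj ->].
Qed.
Lemma Z0_red n M (Z : 'M[int]_n) : Z0 (redm M Z).
Proof. by apply/forallP => p; rewrite ffunE; case: ifP. Qed.

Lemma congm_dvd n k (A B : 'M[int]_n) : congm k A B ->
  (forall i j, (k %| A i j)%Z) -> (forall i j, (k %| B i j)%Z).
Proof.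
move=> h hA i j; have -> : B i j = A i j - (A i j - B i j) by rewrite opprB addrC subrK.
by rewrite rpredB.
Qed.

Definition goodb n M (L : 'M[int]_n) (h : {ffun 'I_n * 'I_n -> 'I_M.+1}) :=
  [forall i, forall j, (M.+1%:Z %| (L^T *m symh h *m L) i j)%Z].
Definition condb n M (d : seq int) (h : {ffun 'I_n * 'I_n -> 'I_M.+1}) :=
  [forall i : 'I_n, forall j : 'I_n,
    (i <= j)%N ==> (M.+1%:Z %| d`_i * d`_j * (h (i, j) : nat)%:Z)%Z].
Definition phim n M (U : 'M[int]_n) (h : {ffun 'I_n * 'I_n -> 'I_M.+1}) :=
  redm M (U^T *m symh h *m U).

Lemma good_cond n M (L U V : 'M[int]_n) (d : seq int) (h : {ffun 'I_n * 'I_n -> 'I_M.+1}) :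
  V \in unitmx -> L = U *m Dm n d *m V -> goodb L h = condb d (phim U h).
Proof.
move=> hV hL; set Y := U^T *m symh h *m U.
have hY : Y^T = Y by rewrite /Y !trmx_mul trmxK symh_tr mulmxA.
have LT : L^T *m symh h *m L = V^T *m (Dm n d *m Y *m Dm n d) *m V.
  by rewrite hL !trmx_mul Dm_tr /Y !mulmxA.
set k := M.+1%:Z.
have S1 : (forall i j, (k %| (L^T *m symh h *m L) i j)%Z) <->
          (forall i j, (k %| (Dm n d *m Y *m Dm n d) i j)%Z).
  rewrite LT; split => H.
    have -> : Dm n d *m Y *m Dm n d =
      (invmx V)^T *m (V^T *m (Dm n d *m Y *m Dm n d) *m V) *m invmx V.
      set X := Dm n d *m Y *m Dm n d; clearbody X.
      have e2 : (invmx V)^T *m V^T = 1%:M by rewrite -trmx_mul mulmxV // trmx1.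
      by rewrite !mulmxA e2 mul1mx -mulmxA (mulmxV hV) mulmx1.
    by apply: dvd_mxr; apply: dvd_mxl.
  by apply: dvd_mxr; apply: dvd_mxl.
set S' := symh (phim U h).
have C : congm k (Dm n d *m S' *m Dm n d) (Dm n d *m Y *m Dm n d).
  by apply: congm_mul; apply: sym_red.
have S2 : (forall i j, (k %| (Dm n d *m Y *m Dm n d) i j)%Z) <->
          (forall i j, (k %| (Dm n d *m S' *m Dm n d) i j)%Z).
  split; apply: congm_dvd => //; exact: congm_sym.
have S3 : (forall i j, (k %| (Dm n d *m S' *m Dm n d) i j)%Z) <->
          condb d (phim U h).
  split.
    move=> H; apply/forallP => i; apply/forallP => j; apply/implyP => hij.
    by move: (H i j); rewrite DmMDm /S' mxE hij mulrAC.
  move=> /forallP H i j; rewrite DmMDm /S' mxE.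
  case: ifP => hij.
    by move: (H i) => /forallP /(_ j); rewrite hij /= mulrAC.
  have hji : (j <= i)%N by move/negbT: hij; rewrite -ltnNge => /ltnW.
  by move: (H j) => /forallP /(_ i); rewrite hji /= [d`_j * _]mulrC mulrAC.
apply/idP/idP.
  move=> /forallP G; apply/S3/S2/S1 => i j; by move: (G i) => /forallP.
move=> /S3/S2/S1 G; apply/forallP => i; apply/forallP => j; exact: G.
Qed.

Lemma phim_inv n M (A B : 'M[int]_n) (h : {ffun 'I_n * 'I_n -> 'I_M.+1}) :
  Z0 h -> B *m A = 1%:M -> phim A (phim B h) = h.
Proof.
move=> hz BA; rewrite /phim.
have hY : (B^T *m symh h *m B)^T = B^T *m symh h *m B.
  by rewrite !trmx_mul trmxK symh_tr mulmxA.
rewrite (red_cong (Z2 := A^T *m (B^T *m symh h *m B) *m A)).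
  by rewrite !mulmxA -trmx_mul BA trmx1 mul1mx -mulmxA BA mulmx1 red_sym.
by apply: congm_mul; apply: sym_red.
Qed.

Lemma count_good n M (L U V : 'M[int]_n) (d : seq int) :
  U \in unitmx -> V \in unitmx -> L = U *m Dm n d *m V ->
  #|[set h : {ffun 'I_n * 'I_n -> 'I_M.+1} | Z0 h && goodb L h]| =
  #|[set h : {ffun 'I_n * 'I_n -> 'I_M.+1} | Z0 h && condb d h]|.
Proof.
move=> hU hV hL.
rewrite -(card_in_imset (f := phim U)); last first.
  move=> x y; rewrite !inE => /andP [zx _] /andP [zy _] e.
  by rewrite -(phim_inv zx (mulmxV hU)) e phim_inv // mulmxV.
congr #|pred_of_set _|; apply/setP => h; rewrite inE; apply/imsetP/idP.
  move=> [x]; rewrite inE => /andP [zx gx] ->.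
  by rewrite Z0_red -(good_cond _ hV hL).
move=> /andP [zh ch]; exists (phim (invmx U) h).
  by rewrite inE Z0_red (good_cond _ hV hL) phim_inv // mulVmx.
by rewrite phim_inv // mulVmx.
Qed.

Open Scope nat_scope.

Lemma count_mult k g : 0 < k -> count (dvdn k) (iota 0 (g * k)) = g.
Proof.
move=> k0; elim: g => [|g IH]; first by rewrite mul0n.
rewrite mulSn addnC iotaD count_cat IH add0n.
case: k k0 IH => // k' _ IH.
rewrite /= dvdn_mull ?dvdnn //.
rewrite (@eq_in_count _ _ pred0); first by rewrite count_pred0; lia.
move=> x; rewrite mem_iota => /andP [lo hi] /=; apply/negbTE/negP => dv.
have : k'.+1 %| x - g * k'.+1 by rewrite dvdn_sub // dvdn_mull.
move/dvdn_leq; lia.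
Qed.

Lemma card_dvd k c : 0 < k -> #|[pred x : 'I_k | k %| c * x]| = gcdn c k.
Proof.
move=> k0; set g := gcdn c k.
have g0 : 0 < g by rewrite gcdn_gt0 k0 orbT.
set k' := k %/ g.
have kk : k = g * k' by rewrite /k' mulnC divnK // dvdn_gcdr.
have k'0 : 0 < k' by move: k0; rewrite kk muln_gt0 => /andP [].
have eqv x : (k %| c * x) = (k' %| x).
  rewrite -(@dvdn_pmul2l g k' x g0) -kk; apply/idP/idP => h.
    have : k %| gcdn (c * x) (k * x) by rewrite dvdn_gcd h dvdn_mulr.
    by rewrite muln_gcdl.
  by apply: dvdn_trans h _; apply: dvdn_mul; [exact: dvdn_gcdl|].
rewrite (eq_card (B := [pred x : 'I_k | k' %| x])); last by move=> x; rewrite !inE eqv.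
by rewrite card_ord_pred kk count_mult.
Qed.
Open Scope ring_scope.
Lemma card_cond n M (d : seq int) :
  #|[set h : {ffun 'I_n * 'I_n -> 'I_M.+1} | Z0 h && condb d h]| =
  (\prod_(p : 'I_n * 'I_n) (if (p.1 <= p.2)%N then gcdn `|(d`_p.1 * d`_p.2)%R|%N M.+1 else 1))%N.
Proof.
pose F (p : 'I_n * 'I_n) : pred 'I_M.+1 := if (p.1 <= p.2)%N then
   [pred x : 'I_M.+1 | (M.+1 %| `|(d`_p.1 * d`_p.2)%R|%N * x)%N] else pred1 ord0.
rewrite (eq_card (B := family F)); last first.
  move=> h; rewrite inE; apply/andP/familyP.
    move=> [/forallP z /forallP c] [i j]; rewrite /F /=; case: ifP => hij.
      move: (c i) => /forallP /(_ j); rewrite hij /= inE.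
      by rewrite dvdzE abszM absz_nat.
    by move: (z (i, j)); rewrite /= hij.
  move=> H; split.
    apply/forallP => -[i j] /=; move: (H (i, j)); rewrite /F /=.
    by case: ifP => //= _ /eqP ->; rewrite eqxx orbT.
  apply/forallP => i; apply/forallP => j; apply/implyP => hij.
  move: (H (i, j)); rewrite /F /= hij inE.
  by rewrite dvdzE !abszM absz_nat.
rewrite card_family foldrE big_map big_enum /=.
apply: eq_bigr => -[i j] _; rewrite /F /=; case: ifP => _.
  by rewrite card_dvd.
by rewrite card1.
Qed.

Open Scope ring_scope.

Lemma gcd_fact n (m : nat) (d : seq int) :
  size d = n -> sorted (fun a b => (a %| b)%Z) d ->
  (forall i, (i < n)%N -> 0 < d`_i) ->
  (forall i, (i < n)%N -> d`_i * d`_(n.-1 - i) = m%:Z) ->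
  forall i j, (i <= j < n)%N ->
  gcdn `|(d`_i * d`_j)%R|%N m =
    if (i + j + 2 <= n)%N then `|(d`_i * d`_j)%R|%N else m.
Proof.
move=> sd ds dp dm i j /andP [ij jn].
have dv a b : (a <= b < n)%N -> (`|(d`_a)%R| %| `|(d`_b)%R|)%N.
  move=> /andP [ab bn]; rewrite -dvdzE.
  apply: (sorted_leq_nth dvdz_trans dvdzz) => //; rewrite inE; lia.
have im : `|(d`_i)%R|%N * `|(d`_(n.-1 - i))%R|%N = m.
  by apply/eqP; rewrite -eqz_nat PoszM !gez0_abs ?dm ?ltW ?dp //; lia.
case: ifP => h.
  apply/gcdn_idPl; rewrite abszM -im dvdn_pmul2l ?absz_gt0 ?gt_eqF ?dp //; last lia.
  apply: dv; lia.
apply/gcdn_idPr; rewrite abszM -im dvdn_pmul2l ?absz_gt0 ?gt_eqF ?dp //; last lia.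
apply: dv; lia.
Qed.

Lemma final_prod (R : numFieldType) n M (d : seq int) :
  size d = n -> sorted (fun a b => (a %| b)%Z) d ->
  (forall i, (i < n)%N -> 0 < d`_i) ->
  (forall i, (i < n)%N -> d`_i * d`_(n.-1 - i) = M.+1%:Z) ->
  ((\prod_(p : 'I_n * 'I_n) (if (p.1 <= p.2)%N then gcdn `|(d`_p.1 * d`_p.2)%R|%N M.+1 else 1))%N%:R
    * (M.+1%:R^-1) ^+ #|[set p : 'I_n * 'I_n | (p.1 <= p.2)%N]| : R) =
  \prod_(1 <= i < (n./2).+1) \prod_(i <= j < (n - i).+1)
      ((d`_i.-1 * d`_j.-1)%:~R / M.+1%:R).
Proof.
move=> sd ds dp dm.
have GF := gcd_fact sd ds dp dm.
have m0 : (M.+1%:R : R) != 0 by rewrite pnatr_eq0.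
set t := fun i j : nat => ((d`_i * d`_j)%:~R / M.+1%:R : R).
rewrite -prodr_const (big_mkcond (fun p => p \in _)) natr_prod -big_split /=.
pose G (i j : 'I_n) := ((if (i <= j)%N then gcdn `|(d`_i * d`_j)%R|%N M.+1 else 1%N)%:R *
   (if (i <= j)%N then M.+1%:R^-1 else 1) : R).
rewrite (eq_bigr (fun p => G p.1 p.2)); last by move=> -[i j] _; rewrite inE.
rewrite -pair_bigA /=.
transitivity (\prod_(i < n) \prod_(i <= j < n.-1 - i) t i j).
  apply: eq_bigr => i _.
  rewrite (@big_nat_widenl _ _ _ i 0) // (@big_nat_widen _ _ _ 0 (n.-1 - i) n); last lia.
  rewrite big_mkcond big_mkord; apply: eq_bigr => j _; rewrite /G.
  case: ifP => ij /=; last by rewrite mulr1.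
  rewrite GF; last by rewrite ij ltn_ord.
  case: ifP => h.
    have -> : (j < n.-1 - i)%N by lia.
    by rewrite natr_absz ger0_norm // mulr_ge0 // ltW // dp //; lia.
  have -> : (j < n.-1 - i)%N = false by lia.
  by rewrite mulfV.
rewrite -(big_mkord xpredT (fun i => \prod_(i <= j < n.-1 - i) t i j)).
rewrite (@big_cat_nat _ _ _ n./2) /=; [|lia|lia].
rewrite [X in _ * X](_ : _ = 1) ?mulr1; last first.
  rewrite big_nat_cond big1 // => i /andP [/andP [hi _] _]; apply: big_geq; lia.
rewrite big_add1 /=; apply: eq_big_nat => i hi.
rewrite big_add1 /=.
have -> : (n - i.+1 = n.-1 - i)%N by lia.
by [].
Qed.

Open Scope ring_scope.
Lemma rat_int_dvd (k : nat) (z : int) : (0 < k)%N ->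
  ((k%:R)^-1 * z%:~R : rat) \is a Num.int = (k%:Z %| z)%Z.
Proof.
move=> k0; apply/idP/idP => h; last by rewrite mulrC; exact: (Qint_dvdz h).
move/intrP: h => [q hq].
have : (z%:~R : rat) = (q * k%:Z)%:~R.
  have kk : (k%:~R : rat) = k%:R by []. rewrite intrM -hq mulrAC kk mulVf ?mul1r //.
  by rewrite pnatr_eq0 -lt0n.
move/eqP; rewrite eqr_int => /eqP ->; exact: dvdz_mull (dvdzz _).
Qed.

Lemma intmx_good n M (Q : 'M[rat]_n) (l : nat) (L Xz : 'M[int]_n) :
  (l ^ 2 = M.+1)%N -> map_mx (fun z : int => z%:~R : rat) L = l%:R *: Q -> Xz^T = Xz ->
  int_mx (Q^T *m map_mx (fun z : int => z%:~R : rat) Xz *m Q) <-> goodb L (redm M Xz).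
Proof.
move=> hl hL hX.
have l0 : (l%:R : rat) != 0.
  by rewrite pnatr_eq0; apply/eqP => l0; move: hl; rewrite l0.
have hQ : Q = (l%:R)^-1 *: map_mx (fun z : int => z%:~R : rat) L.
  by rewrite hL scalerA mulVf // scale1r.
have E : Q^T *m map_mx (fun z : int => z%:~R : rat) Xz *m Q =
   (M.+1%:R)^-1 *: map_mx (fun z : int => z%:~R : rat) (L^T *m Xz *m L).
  by rewrite hQ !map_mxM -map_trmx linearZ /= linearZ /= -!scalemxAl scalerA -invfM -natrM mulnn hl.
have S1 : int_mx (Q^T *m map_mx (fun z : int => z%:~R : rat) Xz *m Q) <->
          (forall i j, (M.+1%:Z %| (L^T *m Xz *m L) i j)%Z).
  rewrite E; split => H i j; move: (H i j); rewrite ?mxE rat_int_dvd //.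
have C : congm M.+1 (L^T *m symh (redm M Xz) *m L) (L^T *m Xz *m L).
  by apply: congm_mul; apply: sym_red.
rewrite S1; split => H.
  apply/forallP => i; apply/forallP => j; move: i j.
  by apply: congm_dvd H; apply: congm_sym.
apply: congm_dvd C _ => i j; by move: H => /forallP /(_ i) /forallP.
Qed.


Local Open Scope ring_scope.
Local Open Scope classical_set_scope.

Lemma meas_mod d (T : measurableType d) (X' : T -> int) (k a : int) :
  (forall z, measurable [set w | X' w = z]) -> measurable [set w | (X' w %% k)%Z = a].
Proof.
move=> mX.
have hz z : measurable [set w | X' w = z /\ (z %% k)%Z = a].
  have [e|e] := eqVneq (z %% k)%Z a.
    have -> : [set w | X' w = z /\ (z %% k)%Z = a] = [set w | X' w = z].
      by apply/seteqP; split => w /= [].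
    exact: mX.
  have -> : [set w | X' w = z /\ (z %% k)%Z = a] = set0.
    by apply/seteqP; split => w //= [_ h]; move/eqP: e.
  exact: measurable0.
have -> : [set w | (X' w %% k)%Z = a] =
    \bigcup_(i in setT) [set w | X' w = Posz i /\ (Posz i %% k)%Z = a] `|`
    \bigcup_(i in setT) [set w | X' w = Negz i /\ (Negz i %% k)%Z = a].
  apply/seteqP; split => w /=.
    case E: (X' w) => [i|i] h; [left|right]; exists i => //; by rewrite E.
  by case => -[i _ [-> h]].
by apply: measurableU; apply: bigcup_measurable => i _; apply: hz.
Qed.

Unset Implicit Arguments.
Theorem corollary1p5 (R : realType) (dsp : measure_display)
  (T : measurableType dsp) (P : probability T R)
  (n : nat) (Q : 'M[rat]_n) (l : nat) (L : 'M[int]_n) (d : seq int)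
  (X : T -> 'M[int]_n) :
  (0 < n)%N ->
  rat_orthogonal Q ->
  is_level Q l ->
  map_mx (fun z : int => z%:~R : rat) L = l%:R *: Q ->
  smith_diag L d ->
  (forall w, (X w)^T = X w) ->
  (forall (i j : 'I_n) (k : int), measurable [set w | X w i j = k]) ->
  mutually_independent_int P [set p : 'I_n * 'I_n | (p.1 <= p.2)%N]
    (fun p w => (X w p.1 p.2 %% (l ^ 2)%:Z)%Z) ->
  (forall i j : 'I_n, (i <= j)%N ->
     uniform_mod P (l ^ 2) (fun w => (X w i j %% (l ^ 2)%:Z)%Z)) ->
  P [set w | int_mx (Q^T *m map_mx (fun z : int => z%:~R : rat) (X w) *m Q)] =
  (\prod_(1 <= i < (n./2).+1) \prod_(i <= j < (n - i).+1)
      ((d`_i.-1 * d`_j.-1)%:~R / (l ^ 2)%:R) : R)%:E.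
Proof.
move=> n0 orth [l0 _] hLQ [sd d0 ds [U hU [V hV hLUV]]] symX measX indep unif.
set M := (l ^ 2).-1.
have hM : (l ^ 2 = M.+1)%N by rewrite /M prednK // expn_gt0 l0.
rewrite hM in indep unif *.
have hLL : L^T *m L = (M.+1%:Z)%:M.
  suff E : map_mx (fun z : int => z%:~R : rat) (L^T *m L) =
           map_mx (fun z : int => z%:~R : rat) ((M.+1%:Z)%:M).
    apply/matrixP => i j; move/matrixP: E => /(_ i j); rewrite !mxE.
    exact: intr_inj.
  rewrite map_mxM -map_trmx hLQ linearZ /= linearZ /= -scalemxAl orth scalerA.
  rewrite -natrM mulnn hM; apply/matrixP => i j; rewrite !mxE.
  by case: (i == j); rewrite /= ?mulr1 ?mulr0.
have [dp dm] := d_pair (ltn0Sn M) hLL sd d0 ds hU hV hLUV.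
set A := [set p : 'I_n * 'I_n | (p.1 <= p.2)%N]%SET in indep *.
set Fset := [set h : {ffun 'I_n * 'I_n -> 'I_M.+1} | Z0 h && goodb L h]%SET.
pose B (h : {ffun 'I_n * 'I_n -> 'I_M.+1}) := [set w | redm M (X w) = h].
have hE : [set w | int_mx (Q^T *m map_mx (fun z : int => z%:~R : rat) (X w) *m Q)] =
    \bigcup_(h in [set h | h \in Fset]) B h.
  apply/seteqP; split => w /=.
    move=> H; exists (redm M (X w)) => //=; rewrite /Fset inE Z0_red /=.
    exact/(intmx_good hM hLQ (symX w)).
  move=> [h /= hin hw]; apply/(intmx_good hM hLQ (symX w)); rewrite hw.
  by move: hin; rewrite /Fset inE => /andP [].
have hB h : Z0 h -> B h = \bigcap_(p in [set p | p \in A])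
    [set w | (X w p.1 p.2 %% M.+1%:Z)%Z = (h p : nat)%:Z].
  move=> zh; apply/seteqP; split => w /=.
    move=> <- p /=; rewrite /A inE => pA; by rewrite ffunE pA modz_val.
  move=> H; apply/ffunP => p; rewrite ffunE; case: ifP => hp.
    apply: val_inj => /=; apply/eqP; rewrite -eqz_nat modz_val; apply/eqP.
    by apply: H; rewrite /= /A inE.
  by move/forallP: zh => /(_ p); rewrite hp /= => /eqP ->.
have PB h : Z0 h -> P (B h) = (((M.+1%:R : R)^-1) ^+ #|A|)%:E.
  move=> zh; rewrite hB //.
  move: (indep A (fun p => (h p : nat)%:Z) (subxx _)) => /= ->.
  rewrite (eq_bigr (fun _ => ((M.+1%:R : R)^-1)%:E)); last first.
    move=> p; rewrite /A inE => hp; apply: (unif p.1 p.2 hp).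
    by rewrite ltz_nat ltn_ord andbT.
  by rewrite prodEFin prodr_const.
have measB h : Z0 h -> measurable (B h).
  move=> zh; rewrite hB //; apply: fin_bigcap_measurable; first exact: finite_finset.
  by move=> p _; apply: meas_mod => z; exact: measX.
rewrite hE measure_fin_bigcup; last 3 first.
- exact: finite_finset.
- apply/trivIsetP => h1 h2 _ _ neq; apply/seteqP; split => w //= [e1 e2].
  by case/eqP: neq; rewrite -e1 -e2.
- by move=> h /=; rewrite /Fset inE => /andP [zh _]; exact: measB.
rewrite (eq_fsbigr (fun _ => (((M.+1%:R : R)^-1) ^+ #|A|)%:E)); last first.
  by move=> h /set_mem /=; rewrite /Fset inE => /andP [zh _]; exact: PB.
rewrite (fsbigE (enum Fset)); first last.
- by move=> h; rewrite /= mem_enum => ->.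
- by move=> h /=; rewrite mem_enum.
- exact: enum_uniq.
rewrite sumEFin; congr EFin.
rewrite big_seq_cond (eq_bigl (fun i => i \in enum Fset)); last first.
  by move=> i; apply: andb_idr; rewrite mem_enum => hi; apply: mem_set.
rewrite -big_seq big_enum /= sumr_const -[LHS]mulr_natl.
rewrite /Fset (count_good _ hU hV hLUV) card_cond.
exact: (final_prod _ sd ds dp dm).
Qed.
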